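(* Let $\Omega\subset\mathbb{R}^d$ be a hypercube of side length $L$, with probability densities $\varphi_P,\varphi_D$ on $\Omega$. For an integer $r\ge1$, let $\mathcal{C}_r=\{C^1,\ldots,C^{r^d}\}$ be the partition of $\Omega$ into the grid of $r^d$ cubes of side $L/r$, and let $\overline{A}=[\overline{\alpha}_{ij}]$ be an optimal solution of the linear program: minimize $\sum_{i,j}\alpha_{ij}\max_{y\in C^i,x\in C^j}\|x-y\|$ over $\alpha_{ij}\ge0$ subject to $\sum_j\alpha_{ij}=\varphi_D(C^i)$ for all $i$ and $\sum_i\alpha_{ij}=\varphi_P(C^j)$ for all $j$. Let $Y$ have density $\varphi_D$ and let $X'$ be its shadow site: with $C^i$ the cell containing $Y$, sample $J=j'$ with probability $\overline{\alpha}_{ij'}/\varphi_D(C^i)$, then sample $X'$ from $\varphi_P$ conditioned on $X'\in C^J$. Then $$\mathbb{E}\|X'-Y\|-W(\varphi_D,\varphi_P)\le\frac{2L\sqrt{d}}{r}.$$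
   Context: For a cell $C$, $\varphi_P(C)=\int_C\varphi_P$, $\varphi_D(C)=\int_C\varphi_D$. The Euclidean Wasserstein distance is $W(\varphi_1,\varphi_2)=\inf_{\gamma\in\Gamma(\varphi_1,\varphi_2)}\int_{\Omega\times\Omega}\|y-x\|\,d\gamma(x,y)$, with $\Gamma(\varphi_1,\varphi_2)$ the set of measures on $\Omega\times\Omega$ with marginal densities $\varphi_1,\varphi_2$. *)

(* Defs.v *)
(* Points of R^d are represented as d.-tuple R,
   equipped with the product (= Borel) sigma-algebra of the library. *)
From HB Require Import structures.
From mathcomp Require Import all_boot all_order all_algebra.
From mathcomp Require Import all_classical all_reals all_analysis.

Unset Implicit Arguments.
Unset Strict Implicit.
Unset Printing Implicit Defensive.

Import Order.TTheory GRing.Theory Num.Theory.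
Import numFieldNormedType.Exports.

Local Open Scope classical_set_scope.
Local Open Scope ring_scope.

Section Defs.
Context {R : realType}.
Context {d : nat}.

Notation pt := (d.-tuple R).

Definition edist (x y : pt) : R :=
  Num.sqrt (\sum_(k < d) (tnth x k - tnth y k) ^+ 2).

Definition box (lo hi : pt) : set pt :=
  [set x | forall k, tnth lo k <= tnth x k <= tnth hi k].

(* lam is the d-dimensional Lebesgue measure: it gives every closed box its
   volume (this characterizes Lebesgue measure on the Borel sets). *)
Definition is_lebesgue (lam : {measure set pt -> \bar R}) : Prop :=
  forall lo hi : pt, (forall k, tnth lo k <= tnth hi k) ->
    lam (box lo hi) = (\prod_(k < d) (tnth hi k - tnth lo k))%:E.

Definition cube (a : pt) (L : R) : set pt :=
  [set x | forall k, tnth a k <= tnth x k <= tnth a k + L].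

Definition is_density (lam : {measure set pt -> \bar R}) (Om : set pt)
    (phi : pt -> R) : Prop :=
  measurable_fun Om phi /\ (forall x, Om x -> 0 <= phi x) /\
  (\int[lam]_(x in Om) (phi x)%:E = 1)%E.

(* the grid of r^d cells of side L/r, indexed by multi-indices c : 'I_d -> 'I_r.
   Cells are half-open (closed on the last layer), so they partition Omega. *)
Definition cell (a : pt) (L : R) (r : nat) (c : {ffun 'I_d -> 'I_r}) : set pt :=
  [set x | forall k,
     tnth a k + L * (c k)%:R / r%:R <= tnth x k /\
     (tnth x k < tnth a k + L * (c k).+1%:R / r%:R \/
      ((c k).+1 = r /\ tnth x k <= tnth a k + L))].

Definition cellmass (lam : {measure set pt -> \bar R}) (phi : pt -> R)
    (C : set pt) : \bar R := (\int[lam]_(x in C) (phi x)%:E)%E.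

Definition cellmax (a : pt) (L : R) (r : nat) (i j : {ffun 'I_d -> 'I_r}) : R :=
  sup [set t | exists x, exists y,
               cell a L r j x /\ cell a L r i y /\ t = edist x y].

Definition lp_feasible (lam : {measure set pt -> \bar R}) (a : pt) (L : R)
    (r : nat) (phiP phiD : pt -> R)
    (alpha : {ffun 'I_d -> 'I_r} -> {ffun 'I_d -> 'I_r} -> R) : Prop :=
  [/\ forall i j, 0 <= alpha i j,
      forall i, ((\sum_j alpha i j)%:E = cellmass lam phiD (cell a L r i)) &
      forall j, ((\sum_i alpha i j)%:E = cellmass lam phiP (cell a L r j))].

Definition lp_cost (a : pt) (L : R) (r : nat)
    (alpha : {ffun 'I_d -> 'I_r} -> {ffun 'I_d -> 'I_r} -> R) : R :=
  \sum_i \sum_j alpha i j * cellmax a L r i j.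

Definition lp_optimal lam a L r phiP phiD alpha : Prop :=
  lp_feasible lam a L r phiP phiD alpha /\
  forall beta, lp_feasible lam a L r phiP phiD beta ->
    lp_cost a L r alpha <= lp_cost a L r beta.

(* E ||X' - Y|| for the shadow site X' of Y ~ phiD:
   P(Y in dy, J = j, X' in dx)
     = phiD(y) 1_{C^i}(y) * alpha_ij / phiD(C^i) * phiP(x) 1_{C^j}(x) / phiP(C^j)
   (terms with phiD(C^i) = 0 or phiP(C^j) = 0 have probability 0). *)
Definition shadow_expectation (lam : {measure set pt -> \bar R}) (a : pt)
    (L : R) (r : nat) (phiP phiD : pt -> R)
    (alpha : {ffun 'I_d -> 'I_r} -> {ffun 'I_d -> 'I_r} -> R) : \bar R :=
  (\sum_i \sum_j
     ((alpha i j / fine (cellmass lam phiD (cell a L r i))) *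
        (fine (cellmass lam phiP (cell a L r j)))^-1)%:E *
     \int[lam]_(y in cell a L r i) \int[lam]_(x in cell a L r j)
        (phiD y * phiP x * edist x y)%:E)%E.

Definition coupling (lam : {measure set pt -> \bar R}) (Om : set pt)
    (phi1 phi2 : pt -> R) (g : {measure set (pt * pt) -> \bar R}) : Prop :=
  [/\ g (~` (Om `*` Om)) = 0%E,
      forall A, measurable A -> A `<=` Om ->
        g (A `*` Om) = (\int[lam]_(x in A) (phi1 x)%:E)%E &
      forall B, measurable B -> B `<=` Om ->
        g (Om `*` B) = (\int[lam]_(x in B) (phi2 x)%:E)%E].

Definition wasserstein (lam : {measure set pt -> \bar R}) (Om : set pt)
    (phi1 phi2 : pt -> R) : \bar R :=
  ereal_inf [set c | exists g : {measure set (pt * pt) -> \bar R},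
    coupling lam Om phi1 phi2 g /\
    c = (\int[g]_(z in Om `*` Om) (edist z.2 z.1)%:E)%E].

End Defs.

(* Main.v *)
Require Import Defs.
From HB Require Import structures.
From mathcomp Require Import all_boot all_order all_algebra.
From mathcomp Require Import all_classical all_reals all_analysis.
From mathcomp Require Import measurable_realfun.
From mathcomp Require Import lra ring.

Import Order.TTheory GRing.Theory Num.Theory.
Import numFieldNormedType.Exports.

Local Open Scope classical_set_scope.
Local Open Scope ring_scope.


Section Alg.
Context {R : realType}.
Lemma cs {n : nat} (u v : 'I_n -> R) :
  \sum_k u k * v k <= Num.sqrt (\sum_k u k ^+ 2) * Num.sqrt (\sum_k v k ^+ 2).
Proof.
set A := \sum_k u k ^+ 2; set B := \sum_k v k ^+ 2; set S := \sum_k u k * v k.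
have A0 : 0 <= A by apply: sumr_ge0 => k _; exact: sqr_ge0.
have B0 : 0 <= B by apply: sumr_ge0 => k _; exact: sqr_ge0.
set s := Num.sqrt A; set t := Num.sqrt B.
have sA : s ^+ 2 = A by rewrite sqr_sqrtr.
have tB : t ^+ 2 = B by rewrite sqr_sqrtr.
have s0 : 0 <= s by apply: sqrtr_ge0.
have t0 : 0 <= t by apply: sqrtr_ge0.
have H : 0 <= \sum_k (t * u k - s * v k) ^+ 2 by apply: sumr_ge0 => k _; exact: sqr_ge0.
have E : \sum_k (t * u k - s * v k) ^+ 2 = t ^+ 2 * A - 2 * s * t * S + s ^+ 2 * B.
  rewrite /A /B /S !mulr_sumr -!sumrB -big_split /=; apply: eq_bigr => k _; ring.
rewrite E sA tB in H.
have [s00|sp] := eqVneq s 0.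
  have : A = 0 by rewrite -sA s00 expr0n.
  move/eqP; rewrite psumr_eq0 => [/allP Hu|k _]; last exact: sqr_ge0.
  rewrite /S big1 ?s00 ?mul0r // => k _.
  have := Hu k (mem_index_enum k); rewrite /= sqrf_eq0 => /eqP ->; by rewrite mul0r.
have [t00|tp] := eqVneq t 0.
  have : B = 0 by rewrite -tB t00 expr0n.
  move/eqP; rewrite psumr_eq0 => [/allP Hu|k _]; last exact: sqr_ge0.
  rewrite /S big1 ?t00 ?mulr0 // => k _.
  have := Hu k (mem_index_enum k); rewrite /= sqrf_eq0 => /eqP ->; by rewrite mulr0.
have stp : 0 < s * t by rewrite mulr_gt0 // lt_neqAle eq_sym ?sp ?tp.
rewrite -(ler_pM2l stp).
have -> : s * t * (s * t) = A * B by rewrite -sA -tB; ring.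
lra.
Qed.

Lemma mink {n : nat} (u v : 'I_n -> R) :
  Num.sqrt (\sum_k (u k + v k) ^+ 2) <=
  Num.sqrt (\sum_k u k ^+ 2) + Num.sqrt (\sum_k v k ^+ 2).
Proof.
set s := Num.sqrt (\sum_k u k ^+ 2); set t := Num.sqrt (\sum_k v k ^+ 2).
have s0 : 0 <= s by apply: sqrtr_ge0.
have t0 : 0 <= t by apply: sqrtr_ge0.
rewrite -[leRHS]ger0_norm ?addr_ge0 // -sqrtr_sqr; apply: ler_wsqrtr.
have A0 : 0 <= \sum_k u k ^+ 2 by apply: sumr_ge0 => k _; exact: sqr_ge0.
have B0 : 0 <= \sum_k v k ^+ 2 by apply: sumr_ge0 => k _; exact: sqr_ge0.
have -> : \sum_k (u k + v k) ^+ 2 =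
   (\sum_k u k ^+ 2) + 2 * (\sum_k u k * v k) + (\sum_k v k ^+ 2).
  rewrite mulr_sumr -!big_split /=; apply: eq_bigr => k _; ring.
have := cs u v; rewrite -/s -/t => h.
have -> : (s + t) ^+ 2 = s ^+ 2 + 2 * (s * t) + t ^+ 2 by ring.
rewrite !sqr_sqrtr //; lra.
Qed.
End Alg.

Section Cells.
Context {R : realType} {d : nat}.
Notation pt := (d.-tuple R).
Context {a : pt} {L : R} {r : nat}.
Hypothesis L0 : 0 < L.
Hypothesis r0 : (0 < r)%N.

Definition del : R := L / r%:R * Num.sqrt d%:R.

Lemma rpos : 0 < (r%:R : R). Proof. by rewrite ltr0n. Qed.

Lemma cell_bnd {c x} : cell a L r c x -> forall k,
  tnth a k + L * (c k)%:R / r%:R <= tnth x k <= tnth a k + L * (c k).+1%:R / r%:R.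
Proof.
move=> hc k; have [h1 [h2|[h3 h4]]] := hc k; rewrite h1 /=; first exact: ltW.
by rewrite h3 mulrK // unitfE gt_eqF // rpos.
Qed.

Lemma cell_diam {c x x'} : cell a L r c x -> cell a L r c x' ->
  Num.sqrt (\sum_k (tnth x' k - tnth x k) ^+ 2) <= del.
Proof.
move=> hx hx'; rewrite /del.
have Lr : 0 < L / r%:R by rewrite divr_gt0 // rpos.
have -> : L / r%:R * Num.sqrt d%:R = Num.sqrt (d%:R * (L / r%:R) ^+ 2).
  by rewrite sqrtrM ?ler0n // sqrtr_sqr ger0_norm ?(ltW Lr) // mulrC.
apply: ler_wsqrtr.
have -> : d%:R * (L / r%:R) ^+ 2 = \sum_(k < d) (L / r%:R) ^+ 2.
  by rewrite sumr_const card_ord mulr_natl.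
apply: ler_sum => k _.
have /andP[a1 a2] := cell_bnd hx k.
have /andP[b1 b2] := cell_bnd hx' k.
have e : L * (c k).+1%:R / r%:R = L * (c k)%:R / r%:R + L / r%:R.
  by rewrite -addn1 natrD mulrDr mulr1 mulrDl.
rewrite e in a2 b2.
set q := L / r%:R in Lr a2 b2 *.
set p := L * (c k)%:R / r%:R in a1 a2 b1 b2.
nra.
Qed.

Lemma key {i j x x' y y'} : cell a L r j x -> cell a L r j x' ->
  cell a L r i y -> cell a L r i y' ->
  Defs.edist x' y' <= Defs.edist x y + 2 * del.
Proof.
move=> hx hx' hy hy'; rewrite /Defs.edist.
have -> : \sum_k (tnth x' k - tnth y' k) ^+ 2 =
  \sum_k ((tnth x' k - tnth x k) + ((tnth x k - tnth y k) + (tnth y k - tnth y' k))) ^+ 2.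
  by apply: eq_bigr => k _; congr (_ ^+ 2); ring.
apply: le_trans (mink _ _) _.
have h1 := cell_diam hx hx'.
have h2 := cell_diam hy' hy.
have h3 := mink (fun k => tnth x k - tnth y k) (fun k => tnth y k - tnth y' k).
lra.
Qed.

End Cells.


Section Meas.
Context {R : realType}.

Lemma m_ge (c : R) : measurable [set t : R | c <= t].
Proof.
rewrite (_ : [set t | c <= t] = `[c, +oo[%classic); first exact: measurable_itv.
by apply/seteqP; split => t /=; rewrite in_itv /= andbT.
Qed.
Lemma m_le (c : R) : measurable [set t : R | t <= c].
Proof.
rewrite (_ : [set t | t <= c] = `]-oo, c]%classic); first exact: measurable_itv.
by apply/seteqP; split => t /=; rewrite in_itv /=.
Qed.
Lemma m_lt (c : R) : measurable [set t : R | t < c].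
Proof.
rewrite (_ : [set t | t < c] = `]-oo, c[%classic); first exact: measurable_itv.
by apply/seteqP; split => t /=; rewrite in_itv /=.
Qed.
Lemma m_prop d' (U : measurableType d') (P : Prop) : measurable [set _ : U | P].
Proof.
have [hP|hP] := pselect P.
  by rewrite (_ : [set _ | P] = setT); [exact: measurableT | apply/seteqP; split].
by rewrite (_ : [set _ | P] = set0); [exact: measurable0 | apply/seteqP; split].
Qed.

Variable d : nat.
Notation pt := (d.-tuple R).

Lemma m_coord (k : 'I_d) (S : set R) : measurable S -> measurable [set x : pt | S (tnth x k)].
Proof.
move=> mS; have := @measurable_tnth _ R d k measurableT S mS.
by rewrite setTI.
Qed.

Lemma in_bigsetI (I : eqType) (s : seq I) (F : I -> set pt) x :
  (\big[setI/setT]_(i <- s) F i) x <-> (forall i, i \in s -> F i x).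
Proof.
elim: s => [|i s IH]; first by rewrite big_nil; split => // _ i.
rewrite big_cons; split.
  move=> [h1 /IH h2] j; rewrite in_cons => /orP[/eqP->//|]; exact: h2.
move=> h; split; first by apply: h; rewrite mem_head.
by apply/IH => j js; apply: h; rewrite in_cons js orbT.
Qed.

Lemma m_allk (P : 'I_d -> set R) : (forall k, measurable (P k)) ->
  measurable [set x : pt | forall k, P k (tnth x k)].
Proof.
move=> mP.
rewrite (_ : [set x | _] = \big[setI/setT]_(k <- index_enum 'I_d) [set x : pt | P k (tnth x k)]).
  by apply: bigsetI_measurable => k _; exact: m_coord.
apply/seteqP; split => x /=.
  by move=> h; apply/in_bigsetI => k _; exact: h.
by move/in_bigsetI => h k; apply: h; rewrite mem_index_enum.
Qed.

Variables (a : pt) (L : R) (r : nat).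

Lemma cell_meas c : measurable (cell a L r c).
Proof.
apply: (m_allk (fun k => [set t | tnth a k + L * (c k)%:R / r%:R <= t] `&`
   ([set t | t < tnth a k + L * (c k).+1%:R / r%:R] `|`
    ([set _ | (c k).+1 = r] `&` [set t | t <= tnth a k + L])))).
move=> k; apply: measurableI; first exact: m_ge.
apply: measurableU; first exact: m_lt.
apply: measurableI; [exact: m_prop | exact: m_le].
Qed.

Lemma cube_meas : measurable (cube a L).
Proof.
apply: (m_allk (fun k => [set t | tnth a k <= t <= tnth a k + L])).
move=> k; rewrite (_ : [set t | _] = `[tnth a k, tnth a k + L]%classic); first exact: measurable_itv.
by apply/seteqP; split => t /=; rewrite in_itv /=.
Qed.

End Meas.


Section Part.
Context {R : realType} {d : nat}.
Notation pt := (d.-tuple R).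
Variables (a : pt) (L : R) (r : nat).
Hypothesis L0 : 0 < L.
Hypothesis r0 : (0 < r)%N.

Let rp : 0 < (r%:R : R). Proof. by rewrite ltr0n. Qed.
Let q := L / r%:R.
Let qp : 0 < q. Proof. by rewrite divr_gt0. Qed.
Let eqn (n : nat) : L * n%:R / r%:R = q * n%:R.
Proof. by rewrite /q mulrAC. Qed.

Lemma cell_sub c x : cell a L r c x -> cube a L x.
Proof.
move=> hc k; have /andP[h1 h2] := cell_bnd r0 hc k.
rewrite !eqn in h1 h2.
have c0 : 0 <= ((c k)%:R : R) by rewrite ler0n.
have c1 : ((c k).+1%:R : R) <= r%:R by rewrite ler_nat.
have qr : q * r%:R = L by rewrite /q divfK // gt_eqF.
apply/andP; split; nra.
Qed.

Lemma cell_le c c' x k : cell a L r c x -> cell a L r c' x -> (c k <= c' k)%N.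
Proof.
move=> h h'; have [h1 _] := h k; have [_ [h2|[h3 _]]] := h' k.
  rewrite !eqn in h1 h2.
  have : q * (c k)%:R < q * (c' k).+1%:R by lra.
  by rewrite ltr_pM2l // ltr_nat ltnS.
by rewrite -ltnS h3.
Qed.

Lemma cell_uniq c c' x : cell a L r c x -> cell a L r c' x -> c = c'.
Proof.
move=> h h'; apply/ffunP => k; apply/val_inj/eqP.
by rewrite eqn_leq (cell_le _ _ _ k h h') (cell_le _ _ _ k h' h).
Qed.

Lemma cell_ne c : exists x, cell a L r c x.
Proof.
exists [tuple tnth a k + L * (c k)%:R / r%:R | k < d] => k.
rewrite tnth_mktuple; split => //; left.
rewrite !eqn ltrD2l ltr_pM2l // ltr_nat //.
Qed.

Lemma cell_cover x : cube a L x -> exists c, cell a L r c x.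
Proof.
move=> hx.
have hr k : (minn (Num.truncn ((tnth x k - tnth a k) / q)) r.-1 < r)%N.
  by rewrite (leq_ltn_trans (geq_minr _ _)) // ltn_predL.
exists [ffun k => Ordinal (hr k)] => k; rewrite ffunE /= !eqn.
have /andP[x1 x2] := hx k.
set z := tnth x k - tnth a k.
have z0 : 0 <= z / q by rewrite divr_ge0 // ?subr_ge0 // ltW.
have /andP[t1 t2] := truncn_itv z0.
set t := Num.truncn (z / q) in t1 t2 *.
have qz : forall u : R, (u <= z / q) = (q * u <= z).
  by move=> u; rewrite ler_pdivlMr // mulrC.
have qz' : forall u : R, (z / q < u) = (z < q * u).
  by move=> u; rewrite ltr_pdivrMr // mulrC.
case: (leqP t r.-1) => ht.
  rewrite qz in t1; rewrite qz' in t2.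
  split; first by rewrite /z in t1; lra.
  by left; rewrite /z in t2; lra.

have : ((r.-1)%:R : R) <= t%:R by rewrite ler_nat ltnW.
rewrite -(ler_pM2l qp) => h.
rewrite qz in t1.
split; first by rewrite /z in t1; lra.
right; split; first by rewrite prednK.
lra.
Qed.

End Part.


Section Int.
Local Open Scope ereal_scope.
Context {dd : measure_display} {T : measurableType dd} {R : realType}.
Variable mu : {measure set T -> \bar R}.

Lemma nm_le_integral (D : set T) (f1 f2 : T -> \bar R) :
  (forall x, D x -> 0 <= f1 x) -> (forall x, D x -> f1 x <= f2 x) ->
  \int[mu]_(x in D) f1 x <= \int[mu]_(x in D) f2 x.
Proof.
move=> f10 f12.
have f20 : forall x, D x -> 0 <= f2 x by move=> x Dx; exact: le_trans (f10 x Dx) (f12 x Dx).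
rewrite (ge0_integralE _ f10) (ge0_integralE _ f20).
apply: ereal_sup_le => _ [h hle <-]; exists h => //= x.
apply: le_trans (hle x) _; rewrite /patch; case: ifP => // /set_mem Dx; exact: f12.
Qed.

Lemma in_bigsetU (I : eqType) (s : seq I) (F : I -> set T) x :
  (\big[setU/set0]_(i <- s) F i) x <-> (exists2 i, i \in s & F i x).
Proof.
elim: s => [|i s IH]; first by rewrite big_nil; split => // -[].
rewrite big_cons; split.
  move=> [Fi|/IH [j js Fj]]; first by exists i => //; rewrite mem_head.
  by exists j => //; rewrite in_cons js orbT.
move=> [j]; rewrite in_cons => /orP[/eqP->|js Fj]; first by left.
by right; apply/IH; exists j.
Qed.

Lemma meas_bigU (I : eqType) (s : seq I) (F : I -> set T) :
  uniq s -> (forall i, measurable (F i)) ->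
  (forall i j, i != j -> F i `&` F j = set0) ->
  mu (\big[setU/set0]_(i <- s) F i) = (\sum_(i <- s) mu (F i))%R.
Proof.
move=> + mF disj; elim: s => [|i s IH]; first by rewrite !big_nil measure0.
rewrite /= => /andP[nis us]; rewrite !big_cons measureU //.
- by congr (_ + _); exact: IH.
- by apply: bigsetU_measurable => j _.
apply/seteqP; split => x // [Fi]; move/in_bigsetU => -[j js Fj].
have ij : i != j by apply: contraNneq nis => ->.
by have := disj i j ij; rewrite -subset0 => /(_ x); apply.
Qed.

End Int.


Section Main.
Context {R : realType} {d : nat}.
Notation pt := (d.-tuple R).
Variables (lam : {measure set pt -> \bar R}) (a : pt) (L : R)
  (phiP phiD : pt -> R) (r : nat).
Notation I := {ffun 'I_d -> 'I_r}.
Variable alpha : I -> I -> R.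
Hypothesis L0 : 0 < L.
Hypothesis hP : is_density lam (cube a L) phiP.
Hypothesis hD : is_density lam (cube a L) phiD.
Hypothesis r0 : (0 < r)%N.
Hypothesis hopt : lp_optimal lam a L r phiP phiD alpha.

Notation C := (cell a L r).
Notation cm := (cellmax a L r).
Notation dl := (@del R d L r).

Lemma cm_ub i j x y : C j x -> C i y -> Defs.edist x y <= cm i j.
Proof.
move=> hx hy; rewrite /cellmax; apply: ub_le_sup; last by exists x, y.
exists (Defs.edist x y + 2 * dl) => _ [x' [y' [hx' [hy' ->]]]].
exact: (key L0 r0 hx hx' hy hy').
Qed.

Lemma cm_lb i j x y : C j x -> C i y -> cm i j <= Defs.edist x y + 2 * dl.
Proof.
move=> hx hy; rewrite /cellmax; apply: ge_sup; first by exists (Defs.edist x y), x, y.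
move=> _ [x' [y' [hx' [hy' ->]]]].
exact: (key L0 r0 hx hx' hy hy').
Qed.

Lemma cm_ge0 i j : 0 <= cm i j.
Proof.
have [x hx] := cell_ne a L r L0 r0 j; have [y hy] := cell_ne a L r L0 r0 i.
apply: le_trans (cm_ub _ _ _ _ hx hy); exact: sqrtr_ge0.
Qed.

Lemma mfun_cell (phi : pt -> R) j : is_density lam (cube a L) phi ->
  measurable_fun (C j) (fun x => (phi x)%:E).
Proof.
move=> [mphi _]; apply/measurable_EFinP.
apply: measurable_funS mphi; first exact: cube_meas.
exact: cell_sub.
Qed.

Lemma phi_ge0 {phi : pt -> R} {j x} : is_density lam (cube a L) phi -> C j x -> 0 <= phi x.
Proof. by move=> [_ [h _]] hx; apply: h; exact: cell_sub hx. Qed.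

Lemma I_bound i j (mP mD : R) :
  cellmass lam phiP (C j) = mP%:E -> cellmass lam phiD (C i) = mD%:E ->
  (\int[lam]_(y in C i) \int[lam]_(x in C j) (phiD y * phiP x * Defs.edist x y)%:E
   <= (cm i j * mP * mD)%:E)%E.
Proof.
move=> hmP hmD.
apply: (@le_trans _ _ (\int[lam]_(y in C i) \int[lam]_(x in C j) (phiD y * phiP x * cm i j)%:E)%E).
  apply: nm_le_integral => y hy.
    apply: integral_ge0 => x hx; rewrite lee_fin.
    by rewrite !mulr_ge0 ?(phi_ge0 hD hy) ?(phi_ge0 hP hx) ?sqrtr_ge0.
  apply: nm_le_integral => x hx; rewrite lee_fin.
    by rewrite !mulr_ge0 ?(phi_ge0 hD hy) ?(phi_ge0 hP hx) ?sqrtr_ge0.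
  apply: ler_wpM2l; first by rewrite mulr_ge0 ?(phi_ge0 hD hy) ?(phi_ge0 hP hx).
  exact: cm_ub.
rewrite (@eq_integral _ _ _ lam (C i) (fun y => ((cm i j * mP)%:E * (phiD y)%:E)%E)); last first.
  move=> y; rewrite inE => hy.
  rewrite (@eq_integral _ _ _ lam (C j) (fun x => ((phiD y * cm i j)%:E * (phiP x)%:E)%E)); last first.
    by move=> x _; rewrite -EFinM; congr (_%:E); ring.
  rewrite ge0_integralZl_EFin //; first last.
  - by rewrite mulr_ge0 ?(phi_ge0 hD hy) ?cm_ge0.
  - exact: mfun_cell.
  - by move=> x hx; rewrite lee_fin (phi_ge0 hP hx).
  - exact: cell_meas.
  rewrite -/(cellmass lam phiP (C j)) hmP -!EFinM; congr (_%:E); ring.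
rewrite ge0_integralZl_EFin //; first last.
- by rewrite mulr_ge0 ?cm_ge0 //; move: hmP; rewrite /cellmass => /(f_equal fine) /= <-; apply: fine_ge0; apply: integral_ge0 => x hx; rewrite lee_fin (phi_ge0 hP hx).
- exact: mfun_cell.
- by move=> x hx; rewrite lee_fin (phi_ge0 hD hx).
- exact: cell_meas.
by rewrite -/(cellmass lam phiD (C i)) hmD -!EFinM.
Qed.

Lemma shadow_le :
  (shadow_expectation lam a L r phiP phiD alpha <= (lp_cost a L r alpha)%:E)%E.
Proof.
have [[a0 rowS colS] _] := hopt.
rewrite /shadow_expectation /lp_cost -sumEFin; apply: lee_sum => i _.
rewrite -sumEFin; apply: lee_sum => j _.
have hI := I_bound i j _ _ (esym (colS j)) (esym (rowS i)).
rewrite -(rowS i) -(colS j) /=.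
have [->|anz] := eqVneq (alpha i j) 0; first by rewrite !mul0r mul0e.
have ap : 0 < alpha i j by rewrite lt_neqAle eq_sym anz a0.
have mDp : alpha i j <= \sum_j' alpha i j'.
  by rewrite (bigD1 j) //= lerDl sumr_ge0.
have mPp : alpha i j <= \sum_i' alpha i' j.
  by rewrite (bigD1 i) //= lerDl sumr_ge0.
set mD := \sum_j' alpha i j' in mDp hI *.
set mP := \sum_i' alpha i' j in mPp hI *.
have mD0 : 0 < mD by apply: lt_le_trans mDp.
have mP0 : 0 < mP by apply: lt_le_trans mPp.
apply: le_trans (lee_wpmul2l _ hI) _.
  by rewrite lee_fin !mulr_ge0 // ?invr_ge0 ltW.
rewrite -EFinM lee_fin le_eqVlt; apply/orP; left; apply/eqP.
by field; rewrite ?gt_eqF.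
Qed.

Notation Om := (cube a L).

Lemma unionR (A : set pt) :
  \big[setU/set0]_(j <- index_enum I) (A `*` C j) = A `*` Om.
Proof.
apply/seteqP; split => -[y x].
  by move/in_bigsetU => -[j _ [/= hy hx]]; split => //; exact: cell_sub hx.
move=> [/= hy hx]; have [j hj] := cell_cover a L r L0 r0 x hx.
by apply/in_bigsetU; exists j; rewrite ?mem_index_enum.
Qed.

Lemma unionL (B : set pt) :
  \big[setU/set0]_(i <- index_enum I) (C i `*` B) = Om `*` B.
Proof.
apply/seteqP; split => -[y x].
  by move/in_bigsetU => -[j _ [/= hy hx]]; split => //; exact: cell_sub hy.
move=> [/= hy hx]; have [j hj] := cell_cover a L r L0 r0 y hy.
by apply/in_bigsetU; exists j; rewrite ?mem_index_enum.
Qed.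

Lemma disjR (A : set pt) i j : i != j -> (A `*` C i) `&` (A `*` C j) = set0.
Proof.
move=> ij; apply/seteqP; split => // -[y x] [[_ h1] [_ h2]].
by move/eqP: ij; apply; exact: cell_uniq h1 h2.
Qed.

Lemma disjL (B : set pt) i j : i != j -> (C i `*` B) `&` (C j `*` B) = set0.
Proof.
move=> ij; apply/seteqP; split => // -[y x] [[h1 _] [h2 _]].
by move/eqP: ij; apply; exact: cell_uniq h1 h2.
Qed.

Lemma coupling_bound (g : {measure set (pt * pt) -> \bar R}) :
  coupling lam Om phiD phiP g ->
  ((lp_cost a L r alpha - 2 * dl)%:E <=
     \int[g]_(z in Om `*` Om) (Defs.edist z.2 z.1)%:E)%E.
Proof.
move=> [g0 hA hB].
have [[a0 rowS colS] aopt] := hopt.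
have mC := cell_meas d a L r.
have mOm : measurable Om := cube_meas d a L.
have rowG i : (\sum_(j <- index_enum I) g (C i `*` C j) = cellmass lam phiD (C i))%E.
  rewrite -meas_bigU ?index_enum_uniq //; last first.
    - by move=> j k; exact: disjR.
    - by move=> j; apply: measurableX.
  rewrite unionR hA //; exact: cell_sub.
have colG j : (\sum_(i <- index_enum I) g (C i `*` C j) = cellmass lam phiP (C j))%E.
  rewrite -meas_bigU ?index_enum_uniq //; last first.
    - by move=> i k; exact: disjL.
    - by move=> i; apply: measurableX.
  rewrite unionL hB //; exact: cell_sub.
have finG i j : g (C i `*` C j) \is a fin_num.
  rewrite ge0_fin_numE ?measure_ge0 //.
  apply: (@le_lt_trans _ _ (g (C i `*` Om))).
    apply: le_measure; rewrite ?inE; try by apply: measurableX.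
    by move=> [y x] [hy hx]; split => //; exact: cell_sub hx.
  rewrite hA //; last exact: cell_sub.
  by rewrite -/(cellmass lam phiD (C i)) -(rowS i) ltry.
pose beta i j := fine (g (C i `*` C j)).
have gb i j : g (C i `*` C j) = (beta i j)%:E by rewrite fineK.
have feas : lp_feasible lam a L r phiP phiD beta.
  split.
  - by move=> i j; apply: fine_ge0; exact: measure_ge0.
  - move=> i; rewrite -sumEFin -rowG; apply: eq_bigr => j _; by rewrite gb.
  - move=> j; rewrite -sumEFin -colG; apply: eq_bigr => i _; by rewrite gb.
have lpab := aopt beta feas.
have tot : \sum_i \sum_j beta i j = 1.
  apply: EFin_inj; rewrite -sumEFin.
  rewrite (eq_bigr (fun i => g (C i `*` Om))); last first.
    move=> i _; rewrite -sumEFin -unionR meas_bigU ?index_enum_uniq //.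
    - by apply: eq_bigr => j _; rewrite gb.
    - by move=> j; apply: measurableX.
    - by move=> j k; exact: disjR.
  rewrite -meas_bigU ?index_enum_uniq //.
  - by rewrite unionL hA //; have [_ [_ ->]] := hD.
  - by move=> i; apply: measurableX.
  - by move=> i k; exact: disjL.
pose m i j := Num.max (cm i j - 2 * dl) 0.
have key1 : lp_cost a L r beta <= \sum_i \sum_j beta i j * m i j + 2 * dl.
  rewrite -[X in _ + X]mulr1 -tot mulr_sumr; under [X in _ + X]eq_bigr do rewrite mulr_sumr.
  rewrite -big_split /=; apply: ler_sum => i _; rewrite -big_split /=; apply: ler_sum => j _.
  have b0 : 0 <= beta i j by apply: fine_ge0; exact: measure_ge0.
  have : cm i j - 2 * dl <= m i j by rewrite /m le_max lexx.
  move=> h; nra.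
have m0 i j : 0 <= m i j by rewrite /m le_max lexx orbT.
pose h z := \sum_(p : I * I) m p.1 p.2 * \1_(C p.1 `*` C p.2) z.
have mOO : measurable (Om `*` Om) by apply: measurableX.
have int_h : ((\sum_i \sum_j beta i j * m i j)%:E = \int[g]_(z in Om `*` Om) (h z)%:E)%E.
  rewrite pair_big /= -sumEFin /h.
  under eq_integral => z _ do rewrite -sumEFin.
  have mf : forall p : I * I, measurable_fun (Om `*` Om)
      (fun z => (m p.1 p.2 * \1_(C p.1 `*` C p.2) z)%:E).
    move=> p; apply/measurable_EFinP; apply: measurable_funM.
      exact: measurable_cst.
    by apply: measurable_indic; apply: measurableX.
  have f0 : forall (p : I * I) z, (Om `*` Om) z ->
      (0 <= (m p.1 p.2 * \1_(C p.1 `*` C p.2) z)%:E)%E.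
    by move=> p z _; rewrite lee_fin mulr_ge0 // indicE ler0n.
  rewrite (ge0_integral_sum _ mOO mf f0).
  apply: eq_bigr => p _.
  under eq_integral => z _ do rewrite EFinM.
  have mi : measurable_fun (Om `*` Om) (fun z => (\1_(C p.1 `*` C p.2) z : R)%:E).
    by apply/measurable_EFinP; apply: measurable_indic; apply: measurableX.
  have i0 : forall z, (Om `*` Om) z -> (0 <= (\1_(C p.1 `*` C p.2) z : R)%:E)%E.
    by move=> z _; rewrite lee_fin indicE ler0n.
  rewrite (ge0_integralZl_EFin _ mOO i0 mi (m0 p.1 p.2)).
  rewrite integral_indic //; last by apply: measurableX.
  rewrite setIidl; last by move=> [y x] [/= hy hx]; split; [exact: cell_sub hy | exact: cell_sub hx].
  by rewrite gb -EFinM mulrC.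
have h_le z : (Om `*` Om) z -> h z <= Defs.edist z.2 z.1.
  case: z => y x [/= hy hx].
  have [i0 hi0] := cell_cover a L r L0 r0 y hy.
  have [j0 hj0] := cell_cover a L r L0 r0 x hx.
  rewrite /h (bigD1 (i0, j0)) //= big1 ?addr0.
    rewrite indicE mem_set ?mulr1; last by split.
    rewrite /m ge_max sqrtr_ge0 andbT.
    have := cm_lb _ _ _ _ hj0 hi0; lra.
  move=> [i j] /= neq; rewrite indicE memNset ?mulr0 // => -[/= h1 h2].
  move/negP: neq; apply; rewrite xpair_eqE.
  by rewrite (cell_uniq a L r L0 r0 _ _ _ h1 hi0) (cell_uniq a L r L0 r0 _ _ _ h2 hj0) !eqxx.
apply: (@le_trans _ _ (\sum_i \sum_j beta i j * m i j)%:E).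
  by rewrite lee_fin; lra.
rewrite int_h; apply: nm_le_integral => z hz.
  by rewrite lee_fin /h sumr_ge0 // => p _; rewrite mulr_ge0 // indicE ler0n.
by rewrite lee_fin; exact: h_le.
Qed.

End Main.


Theorem lemma8 (R : realType) (d : nat)
    (lam : {measure set (d.-tuple R) -> \bar R})
    (a : d.-tuple R) (L : R) (phiP phiD : d.-tuple R -> R) (r : nat)
    (alpha : {ffun 'I_d -> 'I_r} -> {ffun 'I_d -> 'I_r} -> R) :
  is_lebesgue lam ->
  0 < L ->
  is_density lam (cube a L) phiP ->
  is_density lam (cube a L) phiD ->
  (0 < r)%N ->
  lp_optimal lam a L r phiP phiD alpha ->
  (shadow_expectation lam a L r phiP phiD alpha
     - wasserstein lam (cube a L) phiD phiP
   <= ((2 * L * Num.sqrt (d%:R)) / r%:R)%:E)%E.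
Proof.
move=> _ L0 hP hD r0 hopt.
have hS := shadow_le lam a L phiP phiD r alpha L0 hP hD r0 hopt.
have hW : ((lp_cost a L r alpha - 2 * @del R d L r)%:E <=
           wasserstein lam (cube a L) phiD phiP)%E.
  apply: le_ereal_inf_tmp => _ [g [hg ->]].
  exact: coupling_bound lam a L phiP phiD r alpha L0 hD r0 hopt g hg.
have -> : 2 * L * Num.sqrt d%:R / r%:R = 2 * @del R d L r by rewrite /del; ring.
move: hS hW.
case: (shadow_expectation _ _ _ _ _ _ _) => [s| |] hS;
  case: (wasserstein _ _ _ _) => [w| |] hW //=.
all: try (rewrite lee_fin in hW).
- by rewrite lee_fin in hS; rewrite -EFinD lee_fin; lra.
all: by rewrite ?addeNy ?addNye leNye.
Qed.
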